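(* Consider any execution of Phase 1 of COOL. Let $\boldsymbol M_1,\dots,\boldsymbol M_\eta$ be the distinct initial messages held by honest processors, ordered so that $\boldsymbol M_1,\dots,\boldsymbol M_{\eta^{[1]}}$ are exactly those held by at least one honest processor $i$ with $s^{[1]}_i=1$. For $l\in[1:\eta]$ let $\mathcal A_l=\{i \text{ honest}: \boldsymbol w_i=\boldsymbol M_l\}$ and $\mathcal A^{[1]}_l=\{i\in\mathcal A_l: s^{[1]}_i=1\}$, and for $j\ne l$ let $\mathcal A_{l,j}=\{i\in\mathcal A_l: \boldsymbol h_i^{\mathsf T}\boldsymbol M_l=\boldsymbol h_i^{\mathsf T}\boldsymbol M_j\}$ and $\mathcal A^{[1]}_{l,j}=\{i\in\mathcal A^{[1]}_l: \boldsymbol h_i^{\mathsf T}\boldsymbol M_l=\boldsymbol h_i^{\mathsf T}\boldsymbol M_j\}$. If $\eta\ge\eta^{[1]}\ge 2$, then $|\mathcal A_{l,j}|+|\mathcal A_{j,l}|<k$ for all $j\ne l$, $j,l\in[1:\eta]$, and $|\mathcal A^{[1]}_{l,j}|+|\mathcal A^{[1]}_{j,l}|<k$ for all $j\ne l$, $j,l\in[1:\eta^{[1]}]$.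
   Context: Setting. $n$ processors indexed by $[1:n]$, pairwise joined by reliable private synchronous channels; recipients know senders. At most $t$ processors are dishonest (controlled arbitrarily by an adversary; missing values replaced by a fixed default); the others are honest. Processor $i$ holds an $\ell$-bit initial message $\boldsymbol w_i$. $\phi$ is a default value different from every $\ell$-bit message. Logarithms are base 2. Code. $k=\lfloor t/5\rfloor+1$, $c=\lceil \max\{\ell,(t/5+1)\log(n+1)\}/k\rceil$. Messages are zero-padded to $kc$ bits and viewed as vectors in $GF(2^c)^k$. Integers in $[1:n]$ are identified with distinct nonzero elements of $GF(2^c)$ (e.g. via binary representation, possible since $n\le 2^c-1$); $\boldsymbol h_i\in GF(2^c)^k$ has entries $h_{i,j}=\prod_{p\in[1:k],\,p\ne j}\frac{i-p}{j-p}$, $j\in[1:k]$, computed in $GF(2^c)$. Phase 1 of COOL (honest processor $i$): set $y^{(i)}_j:=\boldsymbol h_j^{\mathsf T}\boldsymbol w_i$ for $j\in[1:n]$ and $u_i(i):=1$; send $(y^{(i)}_j,y^{(i)}_i)$ to each $j\ne i$; for $j\ne i$ set $u_i(j):=1$ if the pair received from $j$ equals $(y^{(i)}_i,y^{(i)}_j)$ and $u_i(j):=0$ otherwise; the Phase-1 success indicator is $s^{[1]}_i:=1$ if $\sum_{j=1}^n u_i(j)\ge n-t$ and $s^{[1]}_i:=0$ otherwise. *)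

(* Defs.v *)
From mathcomp Require Import all_boot all_order all_algebra all_field.
Set Implicit Arguments. Unset Strict Implicit. Unset Printing Implicit Defensive.
Import GRing.Theory.
Local Open Scope ring_scope.

Definition cool_k (t : nat) : nat := (t %/ 5).+1.

(* c*k >= ell  and  c*k >= (t/5+1) log2(n+1)   (the latter written without
   logarithms:  c*k >= ((t+5)/5) log2(n+1)  <=>  (n+1)^(t+5) <= 2^(5ck)). *)
Definition c_ok (n t ell c : nat) : bool :=
  (ell <= c * cool_k t)%N && (n.+1 ^ (t + 5) <= 2 ^ (5 * (c * cool_k t)))%N.

(* c = ceil(max{ell, (t/5+1) log(n+1)} / k) is the least c satisfying c_ok. *)
Definition is_cool_c (n t ell c : nat) : Prop :=
  c_ok n t ell c /\ forall c', c_ok n t ell c' -> (c <= c')%N.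

Section Cool.
Variables (F : finFieldType) (n t ell c : nat).
(* [bits] : identification of c-bit strings with elements of GF(2^c) *)
Variable bits : c.-tuple bool -> F.
(* [emb] : identification of integers in [1:n] with nonzero field elements *)
Variable emb : nat -> F.

Local Notation k := (cool_k t).

Definition pad (w : seq bool) : seq bool := w ++ nseq (k * c - ell) false.

Definition enc (w : ell.-tuple bool) : 'rV[F]_k :=
  \row_(m < k) bits [tuple nth false (pad w) (m * c + b) | b < c].

(* h_{i,j}, j in [1:k] (j = m.+1), i a processor number *)
Definition hcoef (i : nat) (m : 'I_k) : F :=
  \prod_(p < k | p != m) ((emb i - emb p.+1) / (emb m.+1 - emb p.+1)).

Definition hT (i : nat) (x : 'rV[F]_k) : F := \sum_(m < k) hcoef i m * x 0 m.

(* Processors are 'I_n; processor (i : 'I_n) has number i.+1 in [1:n]. *)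
Variable w : 'I_n -> ell.-tuple bool.
(* recv i j = pair received by processor i from processor j in Phase 1 *)
Variable recv : 'I_n -> 'I_n -> F * F.

Definition y (i j : 'I_n) : F := hT j.+1 (enc (w i)).

Definition u (i j : 'I_n) : bool := (i == j) || (recv i j == (y i i, y i j)).

Definition s1 (i : 'I_n) : bool := (n - t <= \sum_(j < n) u i j)%N.

(* honest senders follow the protocol: honest j sends (y^{(j)}_i, y^{(j)}_j) to i *)
Definition phase1_exec (H : {set 'I_n}) : Prop :=
  forall i j : 'I_n, j \in H -> i != j -> recv i j = (y j i, y j j).

Variable H : {set 'I_n}.
Variable M : nat -> ell.-tuple bool.

Definition Aset (l : nat) : {set 'I_n} := [set i in H | w i == M l].
Definition A1set (l : nat) : {set 'I_n} := [set i in Aset l | s1 i].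
Definition Apair (l j : nat) : {set 'I_n} :=
  [set i in Aset l | hT i.+1 (enc (M l)) == hT i.+1 (enc (M j))].
Definition A1pair (l j : nat) : {set 'I_n} :=
  [set i in A1set l | hT i.+1 (enc (M l)) == hT i.+1 (enc (M j))].

End Cool.

(* Main.v *)
Require Import Defs.
From mathcomp Require Import all_boot all_order all_algebra all_field.
From mathcomp Require Import zify.
Set Implicit Arguments. Unset Strict Implicit. Unset Printing Implicit Defensive.
Import GRing.Theory.
Local Open Scope ring_scope.

Lemma lagrange (F : fieldType) k (a : 'I_k -> F) (x : 'I_k -> F) :
  injective a ->
  exists P : {poly F}, (size P <= k)%N /\
   (forall e, P.[e] = \sum_(m < k) (\prod_(p < k | p != m) ((e - a p)/(a m - a p))) * x m) /\
   (forall m, P.[a m] = x m).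
Proof.
move=> inj.
pose L m := (\prod_(p < k | p != m) (a m - a p)^-1) *: \prod_(p < k | p != m) ('X - (a p)%:P).
have hL : forall e m, (L m).[e] = \prod_(p < k | p != m) ((e - a p)/(a m - a p)).
  move=> e m; rewrite /L hornerZ horner_prod mulrC -big_split /=.
  by apply: eq_bigr => p _; rewrite hornerXsubC.
exists (\sum_(m < k) x m *: L m); split; [|split].
- apply: leq_trans (size_sum _ _ _) _; apply/bigmax_leqP => m _.
  apply: leq_trans (size_scale_leq _ _) _; apply: leq_trans (size_scale_leq _ _) _.
  rewrite size_prod; last by move=> p _; rewrite -size_poly_eq0 size_XsubC.
  rewrite (eq_bigr (fun _ => 2%N)); last by move=> p _; rewrite size_XsubC.
  rewrite sum_nat_const cardC1 card_ord.
  by case: (k) m => [[]//|k0] _ /=; lia.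
- move=> e; rewrite horner_sum; apply: eq_bigr => m _; by rewrite hornerZ hL mulrC.
- move=> m; rewrite horner_sum (bigD1 m) //= big1 ?addr0.
    rewrite hornerZ hL big1 ?mulr1 // => p pm; rewrite divff // subr_eq0.
    by apply/eqP => /inj /eqP; rewrite eq_sym (negbTE pm).
  move=> m' m'm; rewrite hornerZ hL (bigD1 m) 1?eq_sym //= subrr mul0r mul0r mulr0 //.
Qed.

Lemma enc_inj (F : finFieldType) t ell c (bits : c.-tuple bool -> F) (w1 w2 : ell.-tuple bool) :
  (ell <= c * cool_k t)%N -> injective bits -> enc t bits w1 = enc t bits w2 -> w1 = w2.
Proof.
move=> hle binj he; apply: eq_from_tnth => q.
have hq := ltn_ord q.
have hell : (0 < ell)%N by apply: leq_ltn_trans hq.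
have c0 : (0 < c)%N by rewrite lt0n; apply/eqP => c0; move: hle hell; rewrite c0 mul0n; lia.
have hm : (q %/ c < cool_k t)%N by rewrite ltn_divLR // mulnC; apply: leq_trans hle.
have := congr1 (fun A : 'M[F]_(1, cool_k t) => A 0 (Ordinal hm)) he; rewrite !mxE => /binj.
move/(congr1 (fun T => tnth T (Ordinal (ltn_pmod q c0)))); rewrite !tnth_mktuple /=.
rewrite -divn_eq /pad !nth_cat !size_tuple hq !(tnth_nth false) //.
Qed.

Lemma pair_bound n t ell c (F : finFieldType) (bits : c.-tuple bool -> F) (emb : nat -> F)
  (w : 'I_n -> ell.-tuple bool) (H : {set 'I_n}) (M : nat -> ell.-tuple bool) l j :
  (cool_k t <= n)%N -> (ell <= c * cool_k t)%N -> injective bits ->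
  {in [pred i : nat | 1 <= i <= n]%N &, injective emb} ->
  M l != M j ->
  (#|Apair t bits emb w H M l j| + #|Apair t bits emb w H M j l| < cool_k t)%N.
Proof.
move=> hkn hle binj einj hM.
set k := cool_k t.
pose d := enc t bits (M l) - enc t bits (M j).
have [m0 hm0] : exists m, d 0 m != 0.
  case/boolP: [exists m, d 0 m != 0] => [/existsP //|]; rewrite negb_exists => /forallP h.
  case/negP: hM; apply/eqP/(enc_inj hle binj)/eqP; rewrite -subr_eq0; apply/eqP/matrixP => a b.
  by move: (h b); rewrite negbK (ord1 a) /d => /eqP; rewrite !mxE.
pose a (p : 'I_k) := emb p.+1.
have ainj : injective a.
  move=> p q h; apply/val_inj/eq_add_S; apply: einj h.
    by rewrite inE /=; apply: leq_trans (ltn_ord p) hkn.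
  by rewrite inE /=; apply: leq_trans (ltn_ord q) hkn.
have [P [hsz [hev hnod]]] := lagrange (fun m => d 0 m) ainj.
have P0 : P != 0 by apply: contraNneq hm0 => eP; rewrite -hnod eP horner0.
have hroot : forall e : nat, P.[emb e] = hT emb e (enc t bits (M l)) - hT emb e (enc t bits (M j)).
  move=> e; rewrite hev /hT -sumrB; apply: eq_bigr => m _.
  by rewrite /d !mxE mulrBr mulrC.
set S := Apair t bits emb w H M l j :|: Apair t bits emb w H M j l.
have disj : Apair t bits emb w H M l j :&: Apair t bits emb w H M j l = set0.
  apply/setP => i; rewrite !inE; apply/negP => /andP [/andP [/andP [_ /eqP h1] _] /andP [/andP [_ /eqP h2] _]].
  by move: hM; rewrite -h1 -h2 eqxx.
rewrite -cardsUI disj cards0 addn0.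
pose rs := [seq emb (nat_of_ord i).+1 | i : 'I_n <- enum S].
have : (size rs < size P)%N.
  apply: max_poly_roots => //.
    apply/allP => e /mapP [i]; rewrite mem_enum => hi ->.
    rewrite /root hroot; move: hi; rewrite !inE => /orP [] /andP [_ /eqP ->]; by rewrite subrr.
  rewrite /rs map_inj_in_uniq ?enum_uniq // => i i' _ _ h; apply/val_inj/eq_add_S; apply: einj h.
    by rewrite inE /= ltn_ord.
  by rewrite inE /= ltn_ord.
rewrite size_map -cardE => h; apply: leq_trans h hsz.
Qed.

Theorem lemma7 (n t ell c : nat) (F : finFieldType)
  (bits : c.-tuple bool -> F) (emb : nat -> F)
  (w : 'I_n -> ell.-tuple bool) (recv : 'I_n -> 'I_n -> F * F)
  (H : {set 'I_n}) (M : nat -> ell.-tuple bool) (eta eta1 : nat) :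
  (0 < n)%N -> (t <= n)%N ->
  is_cool_c n t ell c ->
  #|F| = (2 ^ c)%N ->
  bijective bits ->
  {in [pred i : nat | 1 <= i <= n]%N &, injective emb} ->
  (forall i : nat, (1 <= i <= n)%N -> emb i != 0%R) ->
  (#|~: H| <= t)%N ->
  phase1_exec t bits emb w recv H ->
  {in [pred l : nat | l < eta]%N &, injective M} ->
  (forall i, i \in H -> exists2 l, (l < eta)%N & w i = M l) ->
  (forall l, (l < eta)%N -> exists2 i, i \in H & w i = M l) ->
  (forall l, (l < eta)%N ->
     (l < eta1)%N = [exists i in H, (w i == M l) && s1 t bits emb w recv i]) ->
  (2 <= eta1 <= eta)%N ->
  (forall l j, (l < eta)%N -> (j < eta)%N -> l != j ->
     (#|Apair t bits emb w H M l j| + #|Apair t bits emb w H M j l| < cool_k t)%N) /\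
  (forall l j, (l < eta1)%N -> (j < eta1)%N -> l != j ->
     (#|A1pair t bits emb w recv H M l j| + #|A1pair t bits emb w recv H M j l| < cool_k t)%N).
Proof.
move=> n0 tn [/andP [hle _] _] _ [g bK _] einj _ _ _ Minj _ _ Heta1 heta.
have binj : injective bits := can_inj bK.
have hkn : (cool_k t <= n)%N by rewrite /cool_k; lia.
have hMne : forall l j, (l < eta)%N -> (j < eta)%N -> l != j -> M l != M j.
  by move=> l j hl hj; apply: contraNneq => e; apply/eqP; apply: Minj e.
have P1 : forall l j, (l < eta)%N -> (j < eta)%N -> l != j ->
     (#|Apair t bits emb w H M l j| + #|Apair t bits emb w H M j l| < cool_k t)%N.
  by move=> l j hl hj hlj; apply: pair_bound => //; apply: hMne.
split => // l j hl hj hlj.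
have hle1 : (eta1 <= eta)%N by case/andP: heta.
have sub : forall a b, A1pair t bits emb w recv H M a b \subset Apair t bits emb w H M a b.
  by move=> a b; apply/subsetP => i; rewrite !inE => /andP [/andP [/andP [-> ->] _] ->].
apply: leq_ltn_trans (P1 l j (leq_trans hl hle1) (leq_trans hj hle1) hlj).
by apply: leq_add; apply: subset_leq_card.
Qed.
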